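(* Let $p$ be a prime. The inclusion $\iota_0:\mathcal A_p\langle1\rangle_*\to\mathcal A_{p*}$ and, for every $k\ge1$, the inclusion $\iota_k:\mathcal A_p\langle k+1\rangle_*\to\mathcal A_p\langle k\rangle_*$ are faithfully flat.
   Context: Dual Steenrod algebra: $\mathcal A_{2*}=\mathbb F_2[\zeta_1,\zeta_2,\dots]$ ($\deg\zeta_i=2^i-1$); for odd $p$, $\mathcal A_{p*}=E(\tau_0,\tau_1,\dots)\otimes\mathbb F_p[\xi_1,\xi_2,\dots]$ ($\deg\tau_i=2p^i-1$, $\deg\xi_i=2(p^i-1)$), $E$ denoting an exterior algebra. $\mathcal A_p\langle k\rangle_*$ ($k\ge1$) is the subalgebra $\mathbb F_2[\zeta_1^{2^k},\zeta_2^{2^k},\dots]$ if $p=2$; $E(\tau_0)\otimes\mathbb F_p[\xi_1^p,\xi_2^p,\dots]$ if $p$ odd and $k=1$; $\mathbb F_p[\xi_1^{p^k},\xi_2^{p^k},\dots]$ if $p$ odd and $k\ge2$. *)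

(* Defs.v *)
From HB Require Import structures.
From mathcomp Require Import all_boot all_algebra.
From mathcomp Require Import finmap.
From mathcomp.multinomials Require Import monalg.

Set Implicit Arguments.
Unset Strict Implicit.
Unset Printing Implicit Defensive.

Import GRing.Theory.
Local Open Scope ring_scope.

Section Tensor.
Variables (R : zmodType) (mul : R -> R -> R) (one : R).

Definition is_lmod_over (S : R -> Prop) (N : zmodType) (act : R -> N -> N) :=
  [/\ forall s x y, S s -> act s (x + y) = act s x + act s y,
      forall s t x, S s -> S t -> act (s + t) x = act s x + act t x,
      forall s t x, S s -> S t -> act (mul s t) x = act s (act t x)
    & forall x, act one x = x].

Definition is_lin_over (S : R -> Prop) (N1 N2 : zmodType)
    (act1 : R -> N1 -> N1) (act2 : R -> N2 -> N2) (f : N1 -> N2) :=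
  (forall x y, f (x + y) = f x + f y) /\
  (forall s x, S s -> f (act1 s x) = act2 s (f x)).

(* The tensor product M (x)_S N of the right S-module M (right action   *)
(* given by [mul]) with the left S-module N is the quotient of the free  *)
(* abelian group on M x N (elements of {malg int[R * N]} supported on    *)
(* M x N) by the subgroup generated by the bilinearity / balancing       *)
(* relations.  [tens0] is membership in that subgroup, i.e. vanishing in *)
(* M (x)_S N. *)
Definition supp_in (M : R -> Prop) (N : zmodType) (x : {malg int[(R * N)%type]}) :=
  forall k, k \in msupp x -> M k.1.

Inductive tens0 (M S : R -> Prop) (N : zmodType) (act : R -> N -> N) :
    {malg int[(R * N)%type]} -> Prop :=
  | tens0_zero : tens0 M S act 0
  | tens0_add x y : tens0 M S act x -> tens0 M S act y -> tens0 M S act (x + y)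
  | tens0_opp x : tens0 M S act x -> tens0 M S act (- x)
  | tens0_addl a a' n : M a -> M a' ->
      tens0 M S act (<< (a + a', n) >> - << (a, n) >> - << (a', n) >>)
  | tens0_addr a n n' : M a ->
      tens0 M S act (<< (a, n + n') >> - << (a, n) >> - << (a, n') >>)
  | tens0_bal a s n : M a -> S s ->
      tens0 M S act (<< (mul a s, n) >> - << (a, act s n) >>).

Definition tens_map (N1 N2 : zmodType) (f : N1 -> N2)
    (x : {malg int[(R * N1)%type]}) : {malg int[(R * N2)%type]} :=
  \sum_(k <- msupp x) << x@_k *g (k.1, f k.2) >>.

Definition flat_over (M S : R -> Prop) :=
  forall (N1 N2 : zmodType) (act1 : R -> N1 -> N1) (act2 : R -> N2 -> N2)
         (f : N1 -> N2),
    is_lmod_over S act1 -> is_lmod_over S act2 ->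
    is_lin_over S act1 act2 f -> injective f ->
    forall x, supp_in M x -> tens0 M S act2 (tens_map f x) -> tens0 M S act1 x.

Definition faithfully_flat_over (M S : R -> Prop) :=
  flat_over M S /\
  forall (N : zmodType) (act : R -> N -> N), is_lmod_over S act ->
    (forall x, supp_in M x -> tens0 M S act x) -> forall n : N, n = 0.

Inductive gen_subring (G : R -> Prop) : R -> Prop :=
  | gen_base x : G x -> gen_subring G x
  | gen_zero : gen_subring G 0
  | gen_one : gen_subring G one
  | gen_add x y : gen_subring G x -> gen_subring G y -> gen_subring G (x + y)
  | gen_opp x : gen_subring G x -> gen_subring G (- x)
  | gen_mul x y : gen_subring G x -> gen_subring G y -> gen_subring G (mul x y).

End Tensor.

(* A monomial is a pair (E, m) with E a finite set of exterior indices  *)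
(* (tau^E = tau_{e1} ... tau_{er}, e1 < ... < er) and m a commutative   *)
(* monomial in polynomial generators indexed by nat.                     *)

Definition smon := ({fset nat} * {cmonom nat})%type.

(* number of transpositions needed to sort tau^E1 tau^E2 *)
Definition ext_cross (E1 E2 : {fset nat}) : nat :=
  (\sum_(i <- E1) \sum_(j <- E2) (j < i)%N)%N.

Notation stAp p := {malg 'F_p[smon]}.

Section DualSteenrodCarrier.
Variable p : nat.

Local Notation stA := (stAp p).

(* tau^E1 x^m1 * tau^E2 x^m2 = sign * tau^(E1 u E2) x^(m1 m2), sign = 0  *)
(* if E1, E2 overlap (tau_i^2 = 0).                                      *)
Definition smon_sign (m1 m2 : smon) : 'F_p :=
  if (m1.1 `&` m2.1)%fset == fset0 then (-1) ^+ ext_cross m1.1 m2.1 else 0.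

Definition smon_mul (m1 m2 : smon) : smon :=
  ((m1.1 `|` m2.1)%fset, mmul m1.2 m2.2).

Definition stmul (f g : stA) : stA :=
  \sum_(m1 <- msupp f) \sum_(m2 <- msupp g)
     << smon_sign m1 m2 * f@_m1 * g@_m2 *g smon_mul m1 m2 >>.

Definition stone : stA := << ((fset0 : {fset nat}), mone) >>.

Definition stpow (x : stA) (n : nat) : stA := iter n (stmul x) stone.

Definition ttau (i : nat) : stA := << ([fset i]%fset, mone) >>.
Definition txi (i : nat) : stA := << ((fset0 : {fset nat}), ucm i) >>.

Definition st_sub (G : stA -> Prop) : stA -> Prop := gen_subring stmul stone G.

(* The dual Steenrod algebra A_{p*}:  F_2[zeta_1, zeta_2, ...] if p = 2  *)
(* (zeta_i = x_i);  E(tau_0, tau_1, ...) (x) F_p[xi_1, xi_2, ...] if p   *)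
(* is odd (xi_i = x_i).                                                   *)
Definition dualSteenrod : stA -> Prop :=
  st_sub (fun a => if p == 2%N then exists2 i, (1 <= i)%N & a = txi i
                   else (exists i, a = ttau i) \/
                        (exists2 i, (1 <= i)%N & a = txi i)).

Definition dualSteenrodk (k : nat) : stA -> Prop :=
  st_sub (fun a =>
    if p == 2%N then exists2 i, (1 <= i)%N & a = stpow (txi i) (2 ^ k)
    else if k == 1%N then a = ttau 0 \/
                          (exists2 i, (1 <= i)%N & a = stpow (txi i) p)
    else exists2 i, (1 <= i)%N & a = stpow (txi i) (p ^ k)).

End DualSteenrodCarrier.

(* Main.v *)
Require Import Defs.
From mathcomp Require Import all_boot all_algebra.
From mathcomp Require Import finmap.
From mathcomp.multinomials Require Import monalg.
From mathcomp Require Import ring.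

Set Implicit Arguments.
Unset Strict Implicit.
Unset Printing Implicit Defensive.
Import GRing.Theory.
Local Open Scope ring_scope.


Section LinZ.
Variables (K : choiceType) (N : zmodType) (g : K -> N).

Definition lz (x : {malg int[K]}) : N := \sum_(k <- msupp x) g k *~ x@_k.

Lemma lzEw (d : {fset K}) x : (msupp x `<=` d)%fset ->
  lz x = \sum_(k <- d) g k *~ x@_k.
Proof.
move=> le; rewrite /lz (big_fset_incl _ le) // => k _ /mcoeff_outdom ->.
by rewrite mulr0z.
Qed.

Lemma lzD x y : lz (x + y) = lz x + lz y.
Proof.
rewrite (@lzEw (msupp x `|` msupp y)%fset) ?msuppD_le //.
rewrite (@lzEw (msupp x `|` msupp y)%fset x) ?fsubsetUl //.
rewrite (@lzEw (msupp x `|` msupp y)%fset y) ?fsubsetUr //.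
by rewrite -big_split; apply: eq_bigr => k _; rewrite mcoeffD mulrzDr.
Qed.

Lemma lzN x : lz (- x) = - lz x.
Proof.
by rewrite /lz msuppN -sumrN; apply: eq_bigr => k _; rewrite mcoeffN mulrNz.
Qed.

Lemma lz0 : lz 0 = 0.
Proof. by rewrite /lz msupp0 big_seq_fset0. Qed.

Lemma lzU z k : lz << z *g k >> = g k *~ z.
Proof. by rewrite (@lzEw [fset k]%fset) ?msuppU_le // big_seq_fset1 mcoeffUU. Qed.

Lemma lzB x y : lz (x - y) = lz x - lz y.
Proof. by rewrite lzD lzN. Qed.

Lemma lz_sum (I : Type) (r : seq I) (F : I -> {malg int[K]}) :
  lz (\sum_(i <- r) F i) = \sum_(i <- r) lz (F i).
Proof.
elim: r => [|i r IH]; first by rewrite !big_nil lz0.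
by rewrite !big_cons lzD IH.
Qed.

End LinZ.

Lemma malgUz (K : choiceType) (z : int) (k : K) : << z *g k >> = << k >> *~ z.
Proof. by rewrite -raddfMz /= intz. Qed.

Section Abstract.
Variables (R : zmodType) (mul : R -> R -> R) (one : R) (M S : R -> Prop).
Variables (B : choiceType) (bas : B -> R) (c : B -> R -> R) (bs : R -> {fset B}).
Hypotheses
 (hM0 : M 0) (hMD : forall a a', M a -> M a' -> M (a + a'))
 (hMmul : forall r s, M r -> S s -> M (mul r s))
 (hS0 : S 0)
 (hbas : forall b, M (bas b))
 (hcS : forall b a, M a -> S (c b a))
 (hcD : forall b a a', M a -> M a' -> c b (a + a') = c b a + c b a')
 (hcM : forall b a s, M a -> S s -> c b (mul a s) = mul (c b a) s)
 (hc0 : forall b a, M a -> b \notin bs a -> c b a = 0)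
 (hdec : forall a (L : {fset B}), M a -> (bs a `<=` L)%fset ->
     a = \sum_(b <- L) mul (bas b) (c b a))
 (hone : M one) (b0 : B) (hc1 : c b0 one = one).

Section Mod.
Variables (N : zmodType) (act : R -> N -> N).
Hypothesis hact : is_lmod_over mul one S act.

Local Notation T := (tens0 mul M S act).

Definition Phi b (x : {malg int[(R * N)%type]}) : N :=
  lz (fun k : R * N => act (c b k.1) k.2) x.

Lemma act_addl s t n : S s -> S t -> act (s + t) n = act s n + act t n.
Proof. by case: hact => _ h _ _; apply: h. Qed.
Lemma act_addr s n n' : S s -> act s (n + n') = act s n + act s n'.
Proof. by case: hact => h _ _ _; apply: h. Qed.
Lemma act_mul s t n : S s -> S t -> act (mul s t) n = act s (act t n).
Proof. by case: hact => _ _ h _; apply: h. Qed.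
Lemma act_one n : act one n = n.
Proof. by case: hact. Qed.
Lemma act0 n : act 0 n = 0.
Proof.
have := act_addl n hS0 hS0; rewrite addr0 => h.
by rewrite -[RHS](subrr (act 0 n)) {2}h addrK.
Qed.

Lemma Phi_tens0 b x : T x -> Phi b x = 0.
Proof.
rewrite /Phi; elim=> {x}.
- exact: lz0.
- by move=> x y _ hx _ hy; rewrite lzD hx hy addr0.
- by move=> x _ hx; rewrite lzN hx oppr0.
- move=> a a' n Ma Ma'; rewrite !lzB !lzU !mulr1z /= hcD // act_addl; try exact: hcS.
  by rewrite -addrA -opprD subrr.
- move=> a n n' Ma; rewrite !lzB !lzU !mulr1z /= act_addr; last exact: hcS.
  by rewrite -addrA -opprD subrr.
- move=> a s n Ma Ss; rewrite !lzB !lzU !mulr1z /= hcM // act_mul //; last exact: hcS.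
  by rewrite subrr.
Qed.

Definition E x y := T (x - y).

Lemma T_mulz x z : T x -> T (x *~ z).
Proof.
move=> Tx; have Tn (n : nat) : T (x *+ n).
  elim: n => [|n IH]; first by rewrite mulr0n; apply: tens0_zero.
  by rewrite mulrS; apply: tens0_add.
case: z => n; first exact: Tn.
by rewrite NegzE mulrNz; apply: tens0_opp; apply: Tn.
Qed.

Lemma T_dbl x : T (x - x - x) -> T x.
Proof. by move/tens0_opp; rewrite subrr sub0r opprK. Qed.

Lemma E_refl x : E x x.
Proof. by rewrite /E subrr; apply: tens0_zero. Qed.
Lemma E_sym x y : E x y -> E y x.
Proof. by rewrite /E => h; rewrite -opprB; apply: tens0_opp. Qed.
Lemma E_trans x y z : E x y -> E y z -> E x z.
Proof.
rewrite /E => h1 h2; have -> : x - z = (x - y) + (y - z) by rewrite addrA subrK.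
by apply: tens0_add.
Qed.
Lemma E_add x y x' y' : E x y -> E x' y' -> E (x + x') (y + y').
Proof.
rewrite /E => h1 h2; have -> : (x + x') - (y + y') = (x - y) + (x' - y').
  by rewrite opprD addrACA.
by apply: tens0_add.
Qed.
Lemma E_opp x y : E x y -> E (- x) (- y).
Proof. by rewrite /E -opprD => h; apply: tens0_opp. Qed.
Lemma E_mulz x y z : E x y -> E (x *~ z) (y *~ z).
Proof. by rewrite /E -mulrzBl; apply: T_mulz. Qed.
Lemma E_sum (I : Type) (r : seq I) (F G : I -> {malg int[(R * N)%type]}) :
  (forall i, E (F i) (G i)) -> E (\sum_(i <- r) F i) (\sum_(i <- r) G i).
Proof.
move=> h; elim: r => [|i r IH]; first by rewrite !big_nil; apply: E_refl.
by rewrite !big_cons; apply: E_add.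
Qed.
Lemma E_T x : T x -> E x 0.
Proof. by rewrite /E subr0. Qed.
Lemma T_E x : E x 0 -> T x.
Proof. by rewrite /E subr0. Qed.

Lemma E_addr r n n' : M r ->
  E << (r, n + n') >> (<< (r, n) >> + << (r, n') >>).
Proof. by move=> Mr; rewrite /E opprD addrA; apply: tens0_addr. Qed.

Lemma T_r0 r : M r -> T << (r, 0) >>.
Proof.
move=> Mr; apply: T_dbl; have := tens0_addr mul S act 0 0 Mr.
by rewrite addr0.
Qed.

Lemma E_rN r n : M r -> E << (r, - n) >> (- << (r, n) >>).
Proof.
move=> Mr; have h := E_addr n (- n) Mr; rewrite subrr in h.
have h2 := E_trans (E_sym h) (E_T (T_r0 Mr)).
have h3 := E_add (E_refl (- << (r, n) >>)) h2.
by rewrite addrA addNr add0r addr0 in h3.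
Qed.

Lemma E_rz r n z : M r -> E << (r, n *~ z) >> (<< (r, n) >> *~ z).
Proof.
move=> Mr; have Hn (m : nat) : E << (r, n *+ m) >> (<< (r, n) >> *+ m).
  elim: m => [|m IH]; first by rewrite !mulr0n; apply/E_T/T_r0.
  by rewrite !mulrS; apply: E_trans (E_addr _ _ Mr) _; apply: E_add => //; apply: E_refl.
case: z => m; first exact: Hn.
rewrite NegzE !mulrNz; apply: E_trans (E_rN _ Mr) _; apply: E_opp; exact: Hn.
Qed.

Lemma E_rsum r (I : Type) (s : seq I) (F : I -> N) : M r ->
  E << (r, \sum_(i <- s) F i) >> (\sum_(i <- s) << (r, F i) >>).
Proof.
move=> Mr; elim: s => [|i s IH]; first by rewrite !big_nil; apply/E_T/T_r0.
by rewrite !big_cons; apply: E_trans (E_addr _ _ Mr) _; apply: E_add => //; apply: E_refl.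
Qed.

Lemma E_lsum n (I : Type) (s : seq I) (F : I -> R) : (forall i, M (F i)) ->
  E << (\sum_(i <- s) F i, n) >> (\sum_(i <- s) << (F i, n) >>).
Proof.
move=> MF; elim: s => [|i s IH].
  rewrite !big_nil; apply/E_T/T_dbl; have := tens0_addl mul S act n hM0 hM0.
  by rewrite addr0.
have Ms : M (\sum_(j <- s) F j) by elim: s {IH} => [|j s IH]; rewrite ?big_nil ?big_cons //; apply: hMD.
rewrite !big_cons; apply: E_trans _ (E_add (E_refl _) IH).
by rewrite /E opprD addrA; apply: tens0_addl.
Qed.

Lemma E_dec a n (L : {fset B}) : M a -> (bs a `<=` L)%fset ->
  E << (a, n) >> (\sum_(b <- L) << (bas b, act (c b a) n) >>).
Proof.
move=> Ma sub; rewrite {1}(hdec Ma sub).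
apply: E_trans (E_lsum _ _ _) _ => [b|]; first by apply: hMmul; [apply: hbas|apply: hcS].
by apply: E_sum => b; rewrite /E; apply: tens0_bal; [apply: hbas|apply: hcS].
Qed.

Lemma E_sum_in (I : eqType) (r : seq I) (F G : I -> {malg int[(R * N)%type]}) :
  (forall i, i \in r -> E (F i) (G i)) -> E (\sum_(i <- r) F i) (\sum_(i <- r) G i).
Proof.
move=> h; rewrite big_seq [X in E _ X]big_seq.
apply: (big_ind2 E); [exact: E_refl | move=> *; exact: E_add | exact: h].
Qed.

Lemma recon x : supp_in M x ->
  E x (\sum_(b <- \bigcup_(k <- msupp x) bs k.1) << (bas b, Phi b x) >>)%fset.
Proof.
move=> sx; set L := (\bigcup_(k <- msupp x) bs k.1)%fset.
have sub k : k \in msupp x -> (bs k.1 `<=` L)%fset.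
  by move=> h; apply: bigfcup_sup.
apply: E_sym.
apply: (@E_trans _ (\sum_(b <- L) \sum_(k <- msupp x)
           << (bas b, act (c b k.1) k.2) >> *~ x@_k)).
  apply: E_sum => b; rewrite /Phi /lz; apply: E_trans (E_rsum _ _ (hbas b)) _.
  by apply: E_sum => k; apply: E_rz (hbas b).
rewrite exchange_big /= [X in E _ X]monalgE.
apply: E_sum_in => k kin; rewrite malgUz -mulrz_suml; apply: E_mulz.
case: k kin => a n kin /=; apply: E_sym; apply: E_dec; first exact: (sx _ kin).
exact: (sub _ kin).
Qed.

End Mod.

Lemma fzero (N1 N2 : zmodType) (f : N1 -> N2) :
  (forall x y, f (x + y) = f x + f y) -> f 0 = 0.
Proof.
move=> fD; have := fD 0 0; rewrite addr0 => h.
by rewrite -[RHS](subrr (f 0)) {2}h addrK.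
Qed.

Lemma fN (N1 N2 : zmodType) (f : N1 -> N2) :
  (forall x y, f (x + y) = f x + f y) -> forall x, f (- x) = - f x.
Proof.
move=> fD x; have := fD (- x) x; rewrite addNr (fzero fD) => /eqP.
by rewrite eq_sym addr_eq0 => /eqP.
Qed.

Lemma fz (N1 N2 : zmodType) (f : N1 -> N2) :
  (forall x y, f (x + y) = f x + f y) -> forall x z, f (x *~ z) = f x *~ z.
Proof.
move=> fD x z; have Hn (n : nat) : f (x *+ n) = f x *+ n.
  elim: n => [|n IH]; first by rewrite !mulr0n (fzero fD).
  by rewrite !mulrS fD IH.
case: z => n; first exact: Hn.
by rewrite !NegzE !mulrNz (fN fD) Hn.
Qed.

Lemma fsum (N1 N2 : zmodType) (f : N1 -> N2) :
  (forall x y, f (x + y) = f x + f y) ->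
  forall (I : Type) (r : seq I) (F : I -> N1), f (\sum_(i <- r) F i) = \sum_(i <- r) f (F i).
Proof.
move=> fD I r F; elim: r => [|i r IH]; first by rewrite !big_nil (fzero fD).
by rewrite !big_cons fD IH.
Qed.

Theorem abstract_ff : faithfully_flat_over mul one M S.
Proof.
split.
- move=> N1 N2 act1 act2 f h1 h2 [fD flin] finj x sx T2.
  have key b : Phi act2 b (tens_map f x) = f (Phi act1 b x).
    rewrite /Phi /tens_map lz_sum {2}/lz (fsum fD) big_seq [RHS]big_seq.
    apply: eq_bigr => k kin; rewrite lzU /= (fz fD) flin //; exact: hcS (sx _ kin).
  have P0 b : Phi act1 b x = 0.
    apply: finj; rewrite -key (fzero fD); exact: Phi_tens0 h2 b _ T2.
  apply: T_E; apply: (E_trans (recon act1 sx)).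
  apply: (@E_trans _ _ _ (\sum_(b <- (\bigcup_(k <- msupp x) bs k.1)%fset) 0)).
    by apply: E_sum => b; rewrite P0; apply/E_T/T_r0/hbas.
  by rewrite big1 //; apply: E_refl.
- move=> N act hact H n.
  have sx1 : supp_in M << (one, n) >>.
    move=> k /(fsubsetP msuppU_le); rewrite inE => /eqP -> /=; exact: hone.
  have := Phi_tens0 hact b0 (H _ sx1).
  by rewrite /Phi lzU mulr1z /= hc1 act_one.
Qed.

End Abstract.

Section Concrete.
Variable p : nat.
Local Notation stA := (stAp p).
Local Notation F := ('F_p).

Lemma malgUZ (c : F) (m : smon) : << c *g m >> = c *: (<< m >> : stA).
Proof.
apply/malgP => k; rewrite mcoeffZ [LHS]mcoeffU [in RHS]mcoeffU.
by case: eqP => _; rewrite ?mulr1 ?mulr0.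
Qed.

Lemma malgZU (c x : F) (m : smon) : c *: (<< x *g m >> : stA) = << c * x *g m >>.
Proof.
apply/malgP => k.
rewrite mcoeffZ [in RHS]mcoeffU [in LHS]mcoeffU.
by case: eqP => _; rewrite ?mulr0.
Qed.

Section Lin.
Variable h : smon -> stA.
Definition lf (x : stA) : stA := \sum_(m <- msupp x) x@_m *: h m.

Lemma lfEw (d : {fset smon}) x : (msupp x `<=` d)%fset ->
  lf x = \sum_(m <- d) x@_m *: h m.
Proof.
move=> le; rewrite /lf (big_fset_incl _ le) // => k _ /mcoeff_outdom ->.
by rewrite scale0r.
Qed.

Lemma lfD x y : lf (x + y) = lf x + lf y.
Proof.
rewrite (@lfEw (msupp x `|` msupp y)%fset) ?msuppD_le //.
rewrite (@lfEw (msupp x `|` msupp y)%fset x) ?fsubsetUl //.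
rewrite (@lfEw (msupp x `|` msupp y)%fset y) ?fsubsetUr //.
by rewrite -big_split; apply: eq_bigr => k _; rewrite mcoeffD scalerDl.
Qed.

Lemma lfZ c x : lf (c *: x) = c *: lf x.
Proof.
rewrite (@lfEw (msupp x)) ?msuppZ_le // /lf scaler_sumr.
by apply: eq_bigr => k _; rewrite mcoeffZ scalerA.
Qed.

Lemma lf0 : lf 0 = 0.
Proof. by rewrite /lf msupp0 big_seq_fset0. Qed.

Lemma lfU c k : lf << c *g k >> = c *: h k.
Proof. by rewrite (@lfEw [fset k]%fset) ?msuppU_le // big_seq_fset1 mcoeffUU. Qed.

Lemma lf_sum (I : Type) (r : seq I) (G : I -> stA) :
  lf (\sum_(i <- r) G i) = \sum_(i <- r) lf (G i).
Proof.
elim: r => [|i r IH]; first by rewrite !big_nil lf0.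
by rewrite !big_cons lfD IH.
Qed.
End Lin.

Local Notation sm := (@stmul p).
Local Notation sg := (@smon_sign p).

Lemma stmulEw (d1 d2 : {fset smon}) (f g : stA) :
  (msupp f `<=` d1)%fset -> (msupp g `<=` d2)%fset ->
  sm f g = \sum_(m1 <- d1) \sum_(m2 <- d2)
     << sg m1 m2 * f@_m1 * g@_m2 *g smon_mul m1 m2 >>.
Proof.
move=> le1 le2; rewrite /stmul (big_fset_incl _ le1) => [|m1 _ /mcoeff_outdom ->]; last first.
  by rewrite big1 // => m2 _; rewrite mulr0 mul0r monalgU0.
apply: eq_bigr => m1 _; rewrite (big_fset_incl _ le2) // => m2 _ /mcoeff_outdom ->.
by rewrite mulr0 monalgU0.
Qed.

Lemma stmulDl f f' g : sm (f + f') g = sm f g + sm f' g.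
Proof.
set d := (msupp f `|` msupp f')%fset.
rewrite (@stmulEw d (msupp g)) ?msuppD_le //.
rewrite (@stmulEw d (msupp g) f) ?fsubsetUl //.
rewrite (@stmulEw d (msupp g) f') ?fsubsetUr //.
rewrite -big_split; apply: eq_bigr => m1 _; rewrite -big_split; apply: eq_bigr => m2 _.
by rewrite mcoeffD mulrDr mulrDl monalgUD.
Qed.

Lemma stmulDr f g g' : sm f (g + g') = sm f g + sm f g'.
Proof.
set d := (msupp g `|` msupp g')%fset.
rewrite (@stmulEw (msupp f) d) ?msuppD_le //.
rewrite (@stmulEw (msupp f) d f g) ?fsubsetUl //.
rewrite (@stmulEw (msupp f) d f g') ?fsubsetUr //.
rewrite -big_split; apply: eq_bigr => m1 _; rewrite -big_split; apply: eq_bigr => m2 _.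
by rewrite mcoeffD mulrDr monalgUD.
Qed.

Lemma stmulZl c f g : sm (c *: f) g = c *: sm f g.
Proof.
rewrite (@stmulEw (msupp f) (msupp g)) ?msuppZ_le // /stmul scaler_sumr.
apply: eq_bigr => m1 _; rewrite scaler_sumr; apply: eq_bigr => m2 _.
by rewrite [in LHS]mcoeffZ malgZU; congr (<< _ *g _ >>); ring.
Qed.

Lemma stmulZr c f g : sm f (c *: g) = c *: sm f g.
Proof.
rewrite (@stmulEw (msupp f) (msupp g)) ?msuppZ_le // /stmul scaler_sumr.
apply: eq_bigr => m1 _; rewrite scaler_sumr; apply: eq_bigr => m2 _.
by rewrite [in LHS]mcoeffZ malgZU; congr (<< _ *g _ >>); ring.
Qed.

Lemma stmul0l g : sm 0 g = 0.
Proof. by rewrite /stmul msupp0 big_seq_fset0. Qed.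
Lemma stmul0r f : sm f 0 = 0.
Proof. by rewrite /stmul msupp0 big1 // => m _; rewrite big_seq_fset0. Qed.

Lemma stmul_suml (I : Type) (r : seq I) (G : I -> stA) g :
  sm (\sum_(i <- r) G i) g = \sum_(i <- r) sm (G i) g.
Proof.
elim: r => [|i r IH]; first by rewrite !big_nil stmul0l.
by rewrite !big_cons stmulDl IH.
Qed.
Lemma stmul_sumr (I : Type) (r : seq I) (G : I -> stA) f :
  sm f (\sum_(i <- r) G i) = \sum_(i <- r) sm f (G i).
Proof.
elim: r => [|i r IH]; first by rewrite !big_nil stmul0r.
by rewrite !big_cons stmulDr IH.
Qed.

Lemma stmulUU c c' u v :
  sm << c *g u >> << c' *g v >> = << sg u v * c * c' *g smon_mul u v >>.
Proof.
rewrite (@stmulEw [fset u]%fset [fset v]%fset) ?msuppU_le //.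
by rewrite !big_seq_fset1 !mcoeffUU.
Qed.

Lemma stmul11 u v : sm << u >> << v >> = sg u v *: << smon_mul u v >>.
Proof. by rewrite stmulUU !mulr1 malgUZ. Qed.

End Concrete.

Local Open Scope ring_scope.

Lemma cmFE (m : cmonom nat) (f : nat -> nat) j : f 0%N = 0%N ->
  ([cmonom f (m i) | i in finsupp m])%M j = f (m j).
Proof. by move=> f0; rewrite cmE fsfun_fun; case: finsuppP. Qed.

Lemma big_fsetU_disj (F : nat -> nat) (A B : {fset nat}) :
  (A `&` B == fset0)%fset ->
  (\sum_(i <- (A `|` B)%fset) F i = \sum_(i <- A) F i + \sum_(i <- B) F i)%N.
Proof.
move=> /eqP dis.
have E1 : [fset x in (A `|` B)%fset | x \in A]%fset = A.
  by apply/fsetP => x; rewrite !inE; case: (x \in A); rewrite ?andbT ?andbF.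
have E2 : [fset x in (A `|` B)%fset | x \notin A]%fset = B.
  apply/fsetP => x; rewrite !inE.
  have h : (x \in A) && (x \in B) = false by rewrite -in_fsetI dis inE.
  by case: (x \in A) h => /= [->|_]; rewrite ?andbT.
by rewrite (big_fsetID _ (fun x => x \in A)) E1 E2.
Qed.

Lemma ext_crossUl A B C : (A `&` B == fset0)%fset ->
  ext_cross (A `|` B)%fset C = (ext_cross A C + ext_cross B C)%N.
Proof. by move=> d; rewrite /ext_cross big_fsetU_disj. Qed.

Lemma ext_crossUr A B C : (B `&` C == fset0)%fset ->
  ext_cross A (B `|` C)%fset = (ext_cross A B + ext_cross A C)%N.
Proof.
by move=> d; rewrite /ext_cross -big_split; apply: eq_bigr => i _; rewrite big_fsetU_disj.
Qed.

Section Signs.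
Variable p : nat.
Local Notation sg := (@smon_sign p).

Lemma sign_sq (u v : smon) : (u.1 `&` v.1 == fset0)%fset -> sg u v * sg u v = 1.
Proof. by move=> d; rewrite /smon_sign d -exprMn mulrNN mulr1 expr1n. Qed.

Lemma sign_cocycle (u v w : smon) :
  sg u v * sg (smon_mul u v) w = sg u (smon_mul v w) * sg v w.
Proof.
rewrite /smon_sign /= fsetIUl fsetIUr !fsetU_eq0.
case Duv: (u.1 `&` v.1 == fset0)%fset; case Duw: (u.1 `&` w.1 == fset0)%fset;
  case Dvw: (v.1 `&` w.1 == fset0)%fset => /=; rewrite ?mul0r ?mulr0 //.
by rewrite ext_crossUl // ext_crossUr // !exprD mulrA.
Qed.

Lemma sign_assoc (b s m : smon) : (b.1 `&` s.1 == fset0)%fset ->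
  (b.1 `&` m.1 == fset0)%fset ->
  sg (smon_mul b s) m * sg b (smon_mul s m) = sg s m * sg b s.
Proof.
move=> d1 d2; have d3 : (b.1 `&` (smon_mul s m).1 == fset0)%fset.
  by rewrite /= fsetIUr fsetU_eq0 d1 d2.
have h := sign_cocycle b s m.
have e : sg (smon_mul b s) m = sg b s * sg b (smon_mul s m) * sg s m.
  by rewrite -[LHS]mul1r -(sign_sq d1) -mulrA h; ring.
rewrite e; have := sign_sq d3; set X := sg b (smon_mul s m) => hX.
have -> : sg b s * X * sg s m * X = (X * X) * (sg s m * sg b s) by ring.
by rewrite hX mul1r.
Qed.
End Signs.

Local Open Scope nat_scope.
Definition Pm (Ep : pred nat) (d : nat) (m : smon) : bool :=
  [&& all Ep m.1, all (fun i => (d %| m.2 i)%N) (finsupp m.2) & m.2 0%N == 0%N].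

Lemma PmP (Ep : pred nat) (d : nat) (m : smon) : reflect ((forall i, i \in m.1 -> Ep i) /\
   (forall i, (d %| m.2 i)%N) /\ m.2 0%N = 0%N) (Pm Ep d m).
Proof.
apply: (iffP and3P) => [[/allP h1 /allP h2 /eqP h3]|[h1 [h2 h3]]].
  split=> //; split=> // i.
  have [->|nz] := eqVneq (m.2 i) 0%N; first exact: dvdn0.
  by apply: h2; rewrite -cmE_neq0.
by split; [apply/allP|apply/allP => i _; apply: h2|apply/eqP].
Qed.

Lemma Pm1 (Ep : pred nat) (d : nat) : Pm Ep d ((fset0 : {fset nat}), mone).
Proof. by apply/PmP; split=> [i|]; rewrite ?inE // cm1; split=> // i; rewrite cm1. Qed.

Lemma Pm_mul (Ep : pred nat) (d : nat) (u v : smon) : Pm Ep d u -> Pm Ep d v -> Pm Ep d (smon_mul u v).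
Proof.
move=> /PmP [u1 [u2 u3]] /PmP [v1 [v2 v3]]; apply/PmP; split=> [i|].
  by rewrite /= inE => /orP [/u1|/v1].
by split=> [i|]; rewrite /= cmM ?u3 ?v3 // dvdn_add.
Qed.

Lemma Pm_sub (Ep Ep' : pred nat) (d d' : nat) (m : smon) : (forall i, Ep i -> Ep' i) -> (d' %| d)%N ->
  Pm Ep d m -> Pm Ep' d' m.
Proof.
move=> hE hd /PmP [m1 [m2 m3]]; apply/PmP; split=> [i /m1/hE //|].
by split=> // i; apply: dvdn_trans hd (m2 i).
Qed.

Section Parts.
Variables (ES : pred nat) (dS : nat).

Definition modf (x : nat) : nat := x %% dS.
Definition divf (x : nat) : nat := x - x %% dS.

Definition bpart (m : smon) : smon :=
  ([fset i in m.1 | ~~ ES i]%fset, ([cmonom modf (m.2 i) | i in finsupp m.2])%M).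
Definition spart (m : smon) : smon :=
  ([fset i in m.1 | ES i]%fset, ([cmonom divf (m.2 i) | i in finsupp m.2])%M).

Lemma bpart2 (m : smon) i : (bpart m).2 i = m.2 i %% dS.
Proof. by rewrite /= cmFE // /modf mod0n. Qed.
Lemma spart2 (m : smon) i : (spart m).2 i = m.2 i - m.2 i %% dS.
Proof. by rewrite /= cmFE. Qed.

Lemma bsK (m : smon) : smon_mul (bpart m) (spart m) = m.
Proof.
case: m => E mo; rewrite /smon_mul; congr (_, _).
  by apply/fsetP => i; rewrite /= !inE; case: (ES i); rewrite ?andbT ?andbF ?orbF.
apply/eqP/cmP => i; rewrite cmM bpart2 spart2 /=.
by rewrite subnKC // leq_mod.
Qed.

Lemma bs_disj (m : smon) : ((bpart m).1 `&` (spart m).1 == fset0)%fset.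
Proof.
by apply/eqP/fsetP => i; rewrite /= !inE; case: (ES i); rewrite ?andbT ?andbF.
Qed.

Lemma dvd_mod0 d n : (d %| n)%N -> (n %% d = 0)%N.
Proof. by move=> h; apply/eqP. Qed.

Lemma bpart_mul (m s : smon) : Pm ES dS s -> bpart (smon_mul m s) = bpart m.
Proof.
move=> /PmP [s1 [s2 s3]]; rewrite /bpart; congr (_, _).
  apply/fsetP => i; rewrite /= !inE.
  by case: (boolP (i \in s.1)) => [/s1 ->|]; rewrite ?andbF ?orbF.
apply/eqP/cmP => i; rewrite !cmFE ?/modf ?mod0n //= cmM.
by rewrite -modnDmr (dvd_mod0 (s2 i)) addn0.
Qed.

Lemma spart_mul (m s : smon) : Pm ES dS s -> spart (smon_mul m s) = smon_mul (spart m) s.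
Proof.
move=> /PmP [s1 [s2 s3]]; rewrite /spart /smon_mul; congr (_, _).
  apply/fsetP => i; rewrite /= !inE.
  by case: (boolP (i \in s.1)) => [/s1 ->|]; rewrite ?andbT ?andbF ?orbT ?orbF.
apply/eqP/cmP => i; rewrite cmM !cmFE ?/divf //= cmM.
rewrite -modnDmr (dvd_mod0 (s2 i)) addn0 addnBAC //; exact: leq_mod.
Qed.

Variables (EM : pred nat) (dM : nat).
Hypotheses (dMS : (dM %| dS)%N) (ESM : forall i, ES i -> EM i).

Lemma Pm_bpart (m : smon) : Pm EM dM m -> Pm EM dM (bpart m).
Proof.
move=> /PmP [m1 [m2 m3]]; apply/PmP; split=> [i|].
  by rewrite /= inE => /andP [/m1].
split=> [i|]; rewrite bpart2 ?m3 //.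
  by rewrite /dvdn modn_dvdm //; exact: m2.
by rewrite mod0n.
Qed.

Lemma Pm_spart (m : smon) : Pm EM dM m -> Pm ES dS (spart m).
Proof.
move=> /PmP [m1 [m2 m3]]; apply/PmP; split=> [i|].
  by rewrite /= inE => /andP [_].
split=> [i|]; rewrite spart2 ?m3 //.
by rewrite {1}(divn_eq (m.2 i) dS) addnK dvdn_mull.
Qed.

End Parts.

Local Open Scope ring_scope.

Section Gen.
Variable p : nat.
Local Notation stA := (stAp p).
Local Notation F := ('F_p).
Local Notation sg := (@smon_sign p).
Local Notation gen G := (gen_subring (@stmul p) (@stone p) G).

Definition mspan (P : pred smon) (f : stA) : Prop := forall m, m \in msupp f -> P m.

Section SpanP.
Variable P : pred smon.
Lemma span0 : mspan P 0.
Proof. by move=> m; rewrite msupp0 inE. Qed.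
Lemma mspanD f g : mspan P f -> mspan P g -> mspan P (f + g).
Proof.
move=> hf hg m /(fsubsetP (msuppD_le _ _)); rewrite inE => /orP [/hf|/hg] //.
Qed.
Lemma spanN f : mspan P f -> mspan P (- f).
Proof. by move=> hf m; rewrite msuppN => /hf. Qed.
Lemma spanZ c f : mspan P f -> mspan P (c *: f).
Proof. by move=> hf m /(fsubsetP (msuppZ_le _ _)) /hf. Qed.
Lemma spanU (c : F) m : P m -> mspan P << c *g m >>.
Proof. by move=> hm k /(fsubsetP msuppU_le); rewrite inE => /eqP ->. Qed.
Lemma span_sum (I : Type) (r : seq I) (Q : pred I) (G : I -> stA) :
  (forall i, Q i -> mspan P (G i)) -> mspan P (\sum_(i <- r | Q i) G i).
Proof.
move=> h; apply: (big_ind (mspan P)) => //; [exact: span0|exact: mspanD].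
Qed.
End SpanP.

Lemma gen_sum G (I : Type) (r : seq I) (Q : pred I) (H : I -> stA) :
  (forall i, Q i -> gen G (H i)) -> gen G (\sum_(i <- r | Q i) H i).
Proof.
move=> h; apply: (big_ind (gen G)) => //; [exact: gen_zero|exact: gen_add].
Qed.

Lemma gen_scale G (c : F) x : gen G x -> gen G (c *: x).
Proof.
move=> gx; have -> : c = (val c)%:R by rewrite natr_Zp.
rewrite scaler_nat; elim: (val c) => [|n IH]; first by rewrite mulr0n; exact: gen_zero.
by rewrite mulrS; apply: gen_add.
Qed.

Lemma span_gen G (P : pred smon) : (forall m, P m -> gen G << m >>) ->
  forall f, mspan P f -> gen G f.
Proof.
move=> hm f hf; rewrite (monalgE f) big_seq; apply: gen_sum => m /hf Pm'.
by rewrite malgUZ; apply/gen_scale/hm.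
Qed.

Lemma gen_span G (P : pred smon) : (forall a, G a -> mspan P a) ->
  P ((fset0 : {fset nat}), mone) -> (forall u v, P u -> P v -> P (smon_mul u v)) ->
  forall f, gen G f -> mspan P f.
Proof.
move=> hG P1 Pmul f; elim => {f}.
- exact: hG.
- exact: span0.
- exact: spanU.
- by move=> x y _ hx _ hy; apply: mspanD.
- by move=> x _ hx; apply: spanN.
- move=> x y _ hx _ hy; rewrite /stmul big_seq; apply: span_sum => m1 m1x.
  rewrite big_seq; apply: span_sum => m2 m2y; apply: spanU.
  by apply: Pmul; [apply: hx|apply: hy].
Qed.

Lemma gen_mulmon G u v : gen G << u >> -> gen G << v >> ->
  (u.1 `&` v.1 == fset0)%fset -> gen G << smon_mul u v >>.
Proof.
move=> hu hv d; have := gen_mul hu hv; rewrite stmul11 => h.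
by have := gen_scale (sg u v) h; rewrite scalerA sign_sq // scale1r.
Qed.

End Gen.

Local Open Scope ring_scope.

Definition cpow (i d : nat) : cmonom nat := iter d (fun x => mmul (ucm i) x) mone.

Lemma cpowE i d j : cpow i d j = (d * (i == j))%N.
Proof.
elim: d => [|d IH]; first by rewrite /= cm1.
by rewrite /= cmM IH cmU mulSn.
Qed.

Lemma mdeg_cpow i d : mdeg (cpow i d) = d.
Proof.
elim: d => [|d IH]; first by rewrite /= mdeg1.
by rewrite /= mdegM IH mdegU.
Qed.

Section Mon.
Variable p : nat.
Local Notation stA := (stAp p).
Local Notation gen G := (gen_subring (@stmul p) (@stone p) G).

Lemma gen_mon G (EM : pred nat) (d : nat) : (0 < d)%N ->
  (forall i, EM i -> gen G (ttau p i)) ->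
  (forall i, (0 < i)%N -> gen G << ((fset0 : {fset nat}), cpow i d) >>) ->
  forall m, Pm EM d m -> gen G (<< m >> : stA).
Proof.
move=> d_gt0 hT hX m.
move: {2}(mdeg m.2 + #|` m.1|)%N (leqnn (mdeg m.2 + #|` m.1|)%N) => n.
elim: n m => [|n IH] m hn hm.
- have e2 : m.2 = mone.
    by apply/eqP; rewrite -mdeg_eq0 -leqn0 (leq_trans _ hn) // leq_addr.
  have e1 : m.1 = fset0.
    by apply/eqP; rewrite -cardfs_eq0 -leqn0 (leq_trans _ hn) // leq_addl.
  by case: m e1 e2 {hn hm} => E mo /= -> ->; apply: gen_one.
case/PmP: (hm) => m1 [m2 m3].
case: (eqVneq (finsupp m.2) fset0) => [e|/fset0Pn [i ii]]; last first.
  have nz : m.2 i != 0%N by rewrite cmE_neq0.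
  have i0 : i != 0%N by apply: contraNneq nz => ->; rewrite m3.
  have le : (d <= m.2 i)%N by apply: dvdn_leq; rewrite ?lt0n.
  pose m' : smon := (m.1, divcm m.2 (cpow i d)).
  have e : m = smon_mul m' ((fset0 : {fset nat}), cpow i d).
    rewrite /m' /smon_mul /= fsetU0 [LHS]surjective_pairing; congr (_, _).
    apply/eqP/cmP => j; rewrite cmM divcmE cpowE.
    by case: eqVneq => [<-|_]; rewrite ?muln1 ?muln0 ?subn0 ?addn0 // subnK.
  have hm' : Pm EM d m'.
    apply/PmP; split=> //; split=> [j|]; rewrite /= divcmE cpowE.
      by apply: dvdn_sub => //; apply: dvdn_mulr.
    by rewrite m3.
  rewrite e; apply: gen_mulmon; last by rewrite /= fsetI0.
    apply: IH hm'; rewrite -ltnS (leq_trans _ hn) // ltn_add2r.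
    have -> : mdeg m.2 = (mdeg m'.2 + d)%N by rewrite {1}e /= mdegM mdeg_cpow.
    by rewrite -{1}[mdeg m'.2]addn0 ltn_add2l.
  by apply: hX; rewrite lt0n.
have e2 : m.2 = mone.
  by apply/eqP/cmP => j; rewrite cm1; apply/eqP; rewrite cmE_eq0 e inE.
case: (eqVneq m.1 fset0) => [e1|/fset0Pn [i ii]].
  by case: m e1 e2 {hn hm m1 m2 m3 e} => E mo /= -> ->; apply: gen_one.
pose m' : smon := ((m.1 `\ i)%fset, m.2).
have em : m = smon_mul m' ([fset i]%fset, mone).
  rewrite /m' /smon_mul /= [LHS]surjective_pairing; congr (_, _).
    by rewrite fsetUC fsetD1K.
  by apply/eqP/cmP => j; rewrite cmM cm1 addn0.
rewrite em; apply: gen_mulmon.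
- apply: IH.
    have := hn; rewrite (cardfsD1 i) ii add1n addnS ltnS.
    by rewrite /m' /=.
  apply/PmP; split; last by split.
  by move=> j; rewrite /m' /= inE => /andP [_ /m1].
- exact: hT (m1 _ ii).
- apply/eqP/fsetP => j; rewrite /m' /= !inE; by case: eqVneq; rewrite ?andbF.
Qed.
End Mon.

Local Open Scope ring_scope.



Section Dec.
Variables (p : nat) (EM ES : pred nat) (dM dS : nat).
Hypotheses (dM_gt0 : (0 < dM)%N) (dMS : (dM %| dS)%N) (ESM : forall i, ES i -> EM i).
Local Notation stA := (stAp p).
Local Notation sg := (@smon_sign p).
Local Notation sm := (@stmul p).
Local Notation PM := (Pm EM dM).
Local Notation PS := (Pm ES dS).
Local Notation bp := (bpart ES dS).
Local Notation spp := (spart ES dS).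

Lemma scale_eq (c c' : 'F_p) (x : stA) : c = c' -> c *: x = c' *: x.
Proof. by move->. Qed.
Lemma malgU_eq (c c' : 'F_p) (m : smon) : c = c' -> << c *g m >> = << c' *g m >> :> stA.
Proof. by move->. Qed.

Lemma scale_eqr (c : 'F_p) (x y : stA) : x = y -> c *: x = c *: y.
Proof. by move->. Qed.

Definition cb (b m : smon) : stA :=
  if bp m == b then << sg b (spp m) *g spp m >> else 0.
Definition cc (b : smon) (a : stA) : stA := lf (cb b) a.
Definition bas (b : smon) : stA := if PM b then << b >> else 0.
Definition bs (a : stA) : {fset smon} := (bp @` msupp a)%fset.

Lemma disj_bp_PS m s : PS s -> ((bp m).1 `&` s.1 == fset0)%fset.
Proof.
move=> /PmP [s1 _]; apply/eqP/fsetP => i; rewrite /= !inE.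
by case: (boolP (i \in s.1)) => [/s1 ->|]; rewrite ?andbF.
Qed.

Lemma hc0 b a : mspan PM a -> b \notin bs a -> cc b a = 0.
Proof.
move=> _ nb; rewrite /cc /lf big_seq big1 // => m mi; rewrite /cb.
case: eqP => [e|_]; last by rewrite scaler0.
by case/negP: nb; rewrite -e; apply/imfsetP; exists m.
Qed.

Lemma span_cb b m : PM m -> mspan PS (cb b m).
Proof.
move=> hm; rewrite /cb; case: ifP => _; last exact: span0.
by apply: spanU; exact: Pm_spart hm.
Qed.

Lemma hcS b a : mspan PM a -> mspan PS (cc b a).
Proof.
move=> ha; rewrite /cc /lf big_seq; apply: span_sum => m /ha hm; apply: spanZ.
exact: span_cb.
Qed.

Lemma stmul_exp (a s : stA) : sm a s = \sum_(m1 <- msupp a) \sum_(m2 <- msupp s)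
  (a@_m1 * s@_m2) *: sm << m1 >> << m2 >>.
Proof.
rewrite {1}/stmul; apply: eq_bigr => m1 _; apply: eq_bigr => m2 _.
rewrite stmul11 scalerA malgUZ; apply: scale_eq; ring.
Qed.

Lemma mono_cM b m1 m2 : PM m1 -> PS m2 ->
  cc b (sm << m1 >> << m2 >>) = sm (cb b m1) << m2 >>.
Proof.
move=> h1 h2; rewrite stmul11 /cc lfZ lfU scale1r /cb bpart_mul // spart_mul //.
case: eqVneq => [<-|ne]; last by rewrite scaler0 stmul0l.
rewrite stmulUU malgZU; apply: malgU_eq.
have hs := sign_assoc p (bs_disj ES dS m1) (disj_bp_PS m1 h2).
rewrite bsK in hs; rewrite hs; ring.
Qed.

Lemma hcM b a s : mspan PM a -> mspan PS s -> cc b (sm a s) = sm (cc b a) s.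
Proof.
move=> ha hs; rewrite stmul_exp /cc lf_sum [in RHS]/lf stmul_suml.
rewrite big_seq [in RHS]big_seq; apply: eq_bigr => m1 m1a.
rewrite lf_sum stmulZl [in RHS](monalgE s) stmul_sumr scaler_sumr.
rewrite big_seq [in RHS]big_seq; apply: eq_bigr => m2 m2s.
rewrite lfZ [in RHS]malgUZ stmulZr scalerA; apply: scale_eqr.
by apply: mono_cM; [exact: ha | exact: hs].
Qed.

Lemma hdec a (L : {fset smon}) : mspan PM a -> (bs a `<=` L)%fset ->
  a = \sum_(b <- L) sm (bas b) (cc b a).
Proof.
move=> ha sub.
have step b : sm (bas b) (cc b a) =
   \sum_(m <- msupp a) a@_m *: (if bp m == b then << m >> else 0).
  rewrite /cc /lf /bas; case: ifP => Pb.
    rewrite stmul_sumr big_seq [in RHS]big_seq; apply: eq_bigr => m ma.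
    rewrite stmulZr /cb; case: eqP => [<-|_]; last by rewrite stmul0r.
    by rewrite stmulUU mulr1 sign_sq ?bsK //; exact: bs_disj.
  rewrite stmul0l big_seq big1 // => m ma.
  case: eqP => [e|_]; last by rewrite scaler0.
  by move: Pb; rewrite -e Pm_bpart // ha.
rewrite (eq_bigr _ (fun b _ => step b)) exchange_big /= {1}(monalgE a).
rewrite big_seq [in RHS]big_seq; apply: eq_bigr => m ma.
rewrite -scaler_sumr malgUZ; apply: scale_eqr.
have bL : bp m \in L by apply: (fsubsetP sub); apply/imfsetP; exists m.
rewrite (big_fsetD1 (bp m)) //= eqxx big1_seq ?addr0 // => b /andP [_].
by rewrite in_fsetD1 => /andP [nb _]; rewrite eq_sym (negbTE nb).
Qed.

Lemma hc1 : cc ((fset0 : {fset nat}), mone) (@stone p) = @stone p.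
Proof.
rewrite /cc /stone lfU scale1r /cb.
have e0 : bp ((fset0 : {fset nat}), mone) = ((fset0 : {fset nat}), mone).
  apply: injective_projections; first by apply/fsetP => i; rewrite /= !inE.
  by apply/eqP/cmP => i; rewrite bpart2 /= cm1 mod0n.
have e1 : spp ((fset0 : {fset nat}), mone) = ((fset0 : {fset nat}), mone).
  apply: injective_projections; first by apply/fsetP => i; rewrite /= !inE.
  by apply/eqP/cmP => i; rewrite spart2 /= cm1 mod0n.
rewrite e0 e1 eqxx /smon_sign /= fsetI0 eqxx /ext_cross big_seq_fset0 expr0.
done.
Qed.

End Dec.

Local Open Scope ring_scope.

Section Final.
Variables (p : nat) (EM ES : pred nat) (dM dS : nat).
Hypotheses (dM_gt0 : (0 < dM)%N) (dS_gt0 : (0 < dS)%N) (dMS : (dM %| dS)%N)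
  (ESM : forall i, ES i -> EM i).
Local Notation stA := (stAp p).
Local Notation gen G := (gen_subring (@stmul p) (@stone p) G).

Theorem concrete_ff (GM GS : stA -> Prop) :
  (forall a, GM a -> mspan (Pm EM dM) a) ->
  (forall i, EM i -> gen GM (ttau p i)) ->
  (forall i, (0 < i)%N -> gen GM << ((fset0 : {fset nat}), cpow i dM) >>) ->
  (forall a, GS a -> mspan (Pm ES dS) a) ->
  (forall i, ES i -> gen GS (ttau p i)) ->
  (forall i, (0 < i)%N -> gen GS << ((fset0 : {fset nat}), cpow i dS) >>) ->
  faithfully_flat_over (@stmul p) (@stone p) (gen GM) (gen GS).
Proof.
move=> hGM hTM hXM hGS hTS hXS.
have iffM f : gen GM f <-> mspan (Pm EM dM) f.
  split; first exact: (gen_span hGM (Pm1 EM dM) (@Pm_mul EM dM)).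
  by apply: span_gen; apply: gen_mon dM_gt0 hTM hXM.
have iffS f : gen GS f <-> mspan (Pm ES dS) f.
  split; first exact: (gen_span hGS (Pm1 ES dS) (@Pm_mul ES dS)).
  by apply: span_gen; apply: gen_mon dS_gt0 hTS hXS.
have SM f : gen GS f -> gen GM f.
  by move=> /iffS h; apply/iffM => m /h; apply: Pm_sub.
apply: (@abstract_ff _ _ _ _ _ _ (bas p EM dM) (@cc p ES dS) (bs ES dS)
          _ _ _ _ _ _ _ _ _ ((fset0 : {fset nat}), mone)).
- exact: gen_zero.
- by move=> *; apply: gen_add.
- by move=> r s Mr Ss; apply: gen_mul Mr (SM _ Ss).
- move=> b; rewrite /bas; case: ifP => h; last exact: gen_zero.
  by apply/iffM; apply: spanU.
- by move=> b a /iffM ha; apply/iffS; apply: hcS ha.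
- by move=> b a a' _ _; rewrite /cc lfD.
- by move=> b a s /iffM ha /iffS hs; apply: hcM ha hs.
- move=> a L /iffM ha sub; exact (hdec dMS ha sub).
- exact: gen_one.
- exact: hc1.
Qed.
End Final.

Local Open Scope ring_scope.

Section Inst.
Variable p : nat.
Local Notation stA := (stAp p).
Local Notation gen G := (gen_subring (@stmul p) (@stone p) G).

Definition GenP (Ep : pred nat) (d : nat) (a : stA) : Prop :=
  (exists2 i, Ep i & a = ttau p i) \/
  (exists2 i, (0 < i)%N & a = << ((fset0 : {fset nat}), cpow i d) >>).

Lemma Pm_tau (Ep : pred nat) d i : Ep i -> Pm Ep d ([fset i]%fset, mone).
Proof.
move=> Ei; apply/PmP; split; first by move=> j; rewrite inE => /eqP ->.
by split=> [j|]; rewrite /= cm1.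
Qed.

Lemma Pm_cpow (Ep : pred nat) d i : (0 < i)%N -> Pm Ep d ((fset0 : {fset nat}), cpow i d).
Proof.
move=> i0; apply/PmP; split; first by move=> j; rewrite inE.
split=> [j|]; rewrite /= cpowE; first exact: dvdn_mulr.
by rewrite (negbTE (lt0n_neq0 i0)) muln0.
Qed.

Lemma genP_ff (EM ES : pred nat) (dM dS : nat) :
  (0 < dM)%N -> (0 < dS)%N -> (dM %| dS)%N -> (forall i, ES i -> EM i) ->
  forall GM GS : stA -> Prop,
  (forall a, GM a <-> GenP EM dM a) -> (forall a, GS a <-> GenP ES dS a) ->
  faithfully_flat_over (@stmul p) (@stone p) (gen GM) (gen GS).
Proof.
move=> h1 h2 h3 h4 GM GS hM hS; apply: (concrete_ff h1 h2 h3 h4).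
- move=> a /hM [[i Ei ->]|[i i0 ->]]; apply: spanU; [exact: Pm_tau|exact: Pm_cpow].
- by move=> i Ei; apply: gen_base; apply/hM; left; exists i.
- by move=> i i0; apply: gen_base; apply/hM; right; exists i.
- move=> a /hS [[i Ei ->]|[i i0 ->]]; apply: spanU; [exact: Pm_tau|exact: Pm_cpow].
- by move=> i Ei; apply: gen_base; apply/hS; left; exists i.
- by move=> i i0; apply: gen_base; apply/hS; right; exists i.
Qed.

Lemma cpow1 i : cpow i 1 = ucm i.
Proof. by apply/eqP/cmP => j; rewrite cpowE cmU mul1n. Qed.

Lemma stpow_txi i n : stpow (txi p i) n = << ((fset0 : {fset nat}), cpow i n) >>.
Proof.
elim: n => [|n IH]; first by [].
have -> : stpow (txi p i) n.+1 = stmul (txi p i) (stpow (txi p i) n) by [].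
rewrite IH /txi stmul11.
have -> : smon_sign p ((fset0 : {fset nat}), ucm i) ((fset0 : {fset nat}), cpow i n) = 1.
  by rewrite /smon_sign /= fsetI0 eqxx /ext_cross big_seq_fset0 expr0.
rewrite scale1r.
have -> : smon_mul ((fset0 : {fset nat}), ucm i) ((fset0 : {fset nat}), cpow i n) = ((fset0 : {fset nat}), cpow i n.+1).
  by rewrite /smon_mul /= fsetU0.
reflexivity.
Qed.

Lemma txiE i : txi p i = << ((fset0 : {fset nat}), cpow i 1) >>.
Proof. by rewrite cpow1. Qed.

Lemma iffX (Ep : pred nat) d : (forall i, ~~ Ep i) -> forall a,
  (exists2 i, (1 <= i)%N & a = stpow (txi p i) d) <-> GenP Ep d a.
Proof.
move=> nE a; split=> [[i i1 ->]|[[i Ei]|[i i0 ->]]].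
- by right; exists i; first done; rewrite stpow_txi.
- by move: (nE i); rewrite Ei.
- by exists i; first done; rewrite stpow_txi.
Qed.

Lemma iffX1 (Ep : pred nat) : (forall i, ~~ Ep i) -> forall a,
  (exists2 i, (1 <= i)%N & a = txi p i) <-> GenP Ep 1 a.
Proof.
move=> nE a; split=> [[i i1 ->]|[[i Ei]|[i i0 ->]]].
- by right; exists i; first done; rewrite txiE.
- by move: (nE i); rewrite Ei.
- by exists i; first done; rewrite txiE.
Qed.

Lemma iffTX1 a :
  ((exists i, a = ttau p i) \/ (exists2 i, (1 <= i)%N & a = txi p i)) <-> GenP predT 1 a.
Proof.
split=> [[[i ->]|[i i1 ->]]|[[i _ ->]|[i i0 ->]]].
- by left; exists i.
- by right; exists i; first done; rewrite txiE.
- by left; exists i.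
- by right; exists i; first done; rewrite txiE.
Qed.

Lemma iffT0X d a :
  (a = ttau p 0 \/ (exists2 i, (1 <= i)%N & a = stpow (txi p i) d)) <-> GenP (pred1 0%N) d a.
Proof.
split=> [[->|[i i1 ->]]|[[i /eqP -> ->]|[i i0 ->]]].
- by left; exists 0%N.
- by right; exists i; first done; rewrite stpow_txi.
- by left.
- by right; exists i; first done; rewrite stpow_txi.
Qed.
End Inst.

Theorem proposition4p2 (p : nat) (p_prime : prime p) :
  faithfully_flat_over (@stmul p) (@stone p)
    (@dualSteenrod p) (@dualSteenrodk p 1) /\
  (forall k : nat, (1 <= k)%N ->
    faithfully_flat_over (@stmul p) (@stone p)
      (@dualSteenrodk p k) (@dualSteenrodk p k.+1)).
Proof.
have p0 : (0 < p)%N by apply: prime_gt0.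
split.
- rewrite /dualSteenrod /dualSteenrodk /st_sub.
  case: (p == 2%N).
  + apply: (@genP_ff p pred0 pred0 1 (2 ^ 1)).
    * by [].
    * by [].
    * exact: dvd1n.
    * by [].
    * by move=> a; apply: iffX1.
    * by move=> a; apply: iffX.
  + apply: (@genP_ff p predT (pred1 0%N) 1 p).
    * by [].
    * exact: p0.
    * exact: dvd1n.
    * by [].
    * exact: iffTX1.
    * exact: iffT0X.
- move=> k k1; rewrite /dualSteenrodk /st_sub.
  case: (p == 2%N).
  + apply: (@genP_ff p pred0 pred0 (2 ^ k) (2 ^ k.+1)).
    * by rewrite expn_gt0.
    * by rewrite expn_gt0.
    * by rewrite dvdn_exp2l.
    * by [].
    * by move=> a; apply: iffX.
    * by move=> a; apply: iffX.
  + have -> : (k.+1 == 1%N) = false by case: k k1.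
    case: eqP => [->|_].
    * apply: (@genP_ff p (pred1 0%N) pred0 p (p ^ 2)).
      - exact: p0.
      - by rewrite expn_gt0 p0.
      - by rewrite (dvdn_exp2l p (isT : (1 <= 2)%N)).
      - by [].
      - exact: iffT0X.
      - by move=> a; apply: iffX.
    * apply: (@genP_ff p pred0 pred0 (p ^ k) (p ^ k.+1)).
      - by rewrite expn_gt0 p0.
      - by rewrite expn_gt0 p0.
      - by rewrite dvdn_exp2l.
      - by [].
      - by move=> a; apply: iffX.
      - by move=> a; apply: iffX.
Qed.
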